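(* Let $T\ge 1$ be an integer and for integers $l\ge1$, $0\le n\le l-1$ with $l-n\le T$ put $P^l_D(n)=\frac{\prod_{i=0}^{l-n-1}(1-\frac{i}{T})}{T^{n}}$. If $l \le \lfloor T-\sqrt{T}\rfloor +1$, $n\ge 0$ and $n+1 \le l-2$, then $P^{l-1}_D(n+1) \le P^l_D(n)$. *)

(* Defs.v *)
From HB Require Import structures.
From mathcomp Require Import all_boot all_order all_algebra.
From mathcomp Require Import reals.
Set Implicit Arguments. Unset Strict Implicit. Unset Printing Implicit Defensive.
Import Order.TTheory GRing.Theory Num.Theory.
Local Open Scope ring_scope.

Definition PD (R : realType) (T l n : nat) : R :=
  (\prod_(i < l - n) (1 - i%:R / T%:R)) / T%:R ^+ n.

(* Main.v *)
Require Import Defs.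
From HB Require Import structures.
From mathcomp Require Import all_boot all_order all_algebra.
From mathcomp Require Import reals.
From mathcomp Require Import zify ring lra.
Import Order.TTheory GRing.Theory Num.Theory.
Local Open Scope ring_scope.

Theorem mainTheorem3 (R : realType) (T l n : nat)
  (hT : (1 <= T)%N)
  (hl : (l%:Z <= Num.floor ((T%:R : R) - Num.sqrt (T%:R : R)) + 1)%R)
  (hn : (n.+1 <= l - 2)%N) :
  PD R T (l - 1) n.+1 <= PD R T l n.
Proof.
have [m [Hm1 Hm2]] : exists m, (l - n = m.+2 /\ (l - 1) - n.+1 = m)%N.
  exists (l - n - 2)%N; lia.
have hl1 : ((l - 1)%:Z <= Num.floor ((T%:R : R) - Num.sqrt (T%:R : R)))%R.
  have -> : (l - 1)%:Z = l%:Z - 1 by rewrite subzn //; lia.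
  by rewrite lerBlDr.
move: hl1; rewrite floor_ge_int => hl2.
have hml : (m.+1 <= l - 1)%N by lia.
have hx : ((m.+1)%:R : R) <= T%:R - Num.sqrt (T%:R : R).
  apply: le_trans hl2; rewrite -pmulrn ler_nat //.
set x := (T%:R : R) - (m.+1)%:R.
have hs0 : 0 <= Num.sqrt (T%:R : R) by exact: sqrtr_ge0.
have hs2 : Num.sqrt (T%:R : R) ^+ 2 = T%:R by rewrite sqr_sqrtr.
have hsx : Num.sqrt (T%:R : R) <= x by rewrite /x; lra.
have hTp : (0 : R) < T%:R by rewrite ltr0n.
have key : (T%:R : R) <= x * (x + 1) by nra.
rewrite /PD Hm1 Hm2 !big_ord_recr /=.
set P := \prod_(i < m) _.
have hP : 0 <= P.
  rewrite /P; apply: prodr_ge0 => i _.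
  rewrite subr_ge0 ler_pdivrMr // mul1r ler_nat.
  have := ltn_ord i; have : (m.+1 <= T)%N.
    by rewrite -(ler_nat R); lra.
  lia.
have hD : (0 : R) < T%:R ^+ n by rewrite exprn_gt0.
set D := T%:R ^+ n in hD *.
have hab : T%:R^-1 <= (1 - m%:R / T%:R) * (1 - m.+1%:R / T%:R) :> R.
  have -> : (1 - m%:R / T%:R) * (1 - m.+1%:R / T%:R) = (x + 1) * x / (T%:R ^+ 2) :> R.
    rewrite /x -natr1; field; by rewrite gt_eqF.
  rewrite ler_pdivlMr ?exprn_gt0 // expr2 mulrA mulVf ?gt_eqF // mul1r; nra.
rewrite exprS -/D.
have -> : P / (T%:R * D) = (P * T%:R^-1) / D by field; rewrite !gt_eqF.
have -> : P * (1 - m%:R / T%:R) * (1 - m.+1%:R / T%:R) / D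
  = (P * ((1 - m%:R / T%:R) * (1 - m.+1%:R / T%:R))) / D by rewrite mulrA.
rewrite ler_pM2r ?invr_gt0 //.
by apply: ler_wpM2l.
Qed.
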